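(* Let $(a_k)_{k\ge 0}$ and $(\lambda_k)_{k\ge 1}$ be complex numbers, and define $\mu_0=1$ and, for $n\ge 1$, $\mu_n=\sum_{\pi\in\mathcal{M}_n} v(\pi)$. Let $(c_n)_{n\ge1}$ be the free cumulants of $(\mu_n)$. Then for every $n\ge 2$, $$c_n=\sum_{\pi\in\mathcal{M}_n}\frac{(-1)^{|\pi|_0-1}}{n-1}\binom{n-1}{|\pi|_0}\,v(\pi).$$ (In particular the path consisting of $n$ horizontal steps contributes $0$, since then $|\pi|_0=n$.)
   Context: A Motzkin path of length $n$ is a sequence of integers $\pi=(\pi(0),\pi(1),\dots,\pi(n))$ with $\pi(0)=\pi(n)=0$, $\pi(i)\ge 0$ for all $i$, and $\pi(i)-\pi(i-1)\in\{1,0,-1\}$ for $i=1,\dots,n$ (rising, horizontal, falling step respectively). $\mathcal{M}_n$ denotes the set of Motzkin paths of length $n$. The valuation of a path is $v(\pi)=\prod_{i=1}^n v_i$, where $v_i=1$ if the $i$-th step rises, $v_i=a_{\pi(i-1)}$ if the $i$-th step is horizontal, and $v_i=\lambda_{\pi(i-1)}$ if the $i$-th step falls. $|\pi|_0$ denotes the number of returns to zero of $\pi$, i.e. the number of indices $i\in\{1,\dots,n\}$ with $\pi(i)=0$. Free cumulants: with $M(z)=1+\sum_{n\ge1}\mu_n z^n$ (formal power series), the free cumulants $c_n$ are the coefficients of the formal power series $C(z)=1+\sum_{n\ge1}c_nz^n$ uniquely determined by $C(zM(z))=M(z)$. *)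

(* Defs.v *)
From HB Require Import structures.
From mathcomp Require Import all_boot all_order all_algebra.
From mathcomp Require Import complex.
From mathcomp Require Import reals.
Set Implicit Arguments. Unset Strict Implicit. Unset Printing Implicit Defensive.
Import Order.TTheory GRing.Theory Num.Theory.
Local Open Scope ring_scope.

(* A path of length n is encoded by its height function k |-> pi(k), k = 0..n.
   Heights are natural numbers (so pi(i) >= 0 is built in); they are stored in
   'I_n.+1, which loses nothing since a Motzkin path of length n never exceeds
   height n. *)
Definition mpath (n : nat) := {ffun 'I_n.+1 -> 'I_n.+1}.

Definition ht (n : nat) (p : mpath n) (k : nat) : nat := p (inord k).

Definition is_motzkin (n : nat) (p : mpath n) : bool :=
  [&& ht p 0 == 0%N, ht p n == 0%N &
      [forall i : 'I_n,
         [|| ht p i.+1 == (ht p i).+1,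
             ht p i.+1 == ht p i |
             (ht p i.+1).+1 == ht p i]]].

Definition motzkin_paths (n : nat) : {set mpath n} := [set p | is_motzkin p].

(* weight of the i-th step (i = 1..n), encoded via step index i = j.+1 *)
Definition step_weight (C : ringType) (a lam : nat -> C) (n : nat) (p : mpath n)
    (j : nat) : C :=
  if ht p j.+1 == (ht p j).+1 then 1
  else if ht p j.+1 == ht p j then a (ht p j)
  else lam (ht p j).

Definition valuation (C : ringType) (a lam : nat -> C) (n : nat) (p : mpath n) : C :=
  \prod_(j < n) step_weight a lam p j.

Definition returns0 (n : nat) (p : mpath n) : nat :=
  #|[set j : 'I_n | ht p j.+1 == 0%N]|.

Definition moment (C : ringType) (a lam : nat -> C) (n : nat) : C :=
  if n is 0 then 1 else \sum_(p in motzkin_paths n) valuation a lam p.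

(* (c_n) are the free cumulants of (mu_n): with M(z) = sum_n mu_n z^n (mu_0 = 1)
   and C(z) = 1 + sum_{n>=1} c_n z^n, we have C(z M(z)) = M(z) as formal power
   series.  Coefficient N of C(zM(z)) only involves c_0..c_N and mu_0..mu_N,
   so the identity is expressed coefficientwise via polynomial truncations. *)
Definition trunc_series (C : ringType) (u : nat -> C) (N : nat) : {poly C} :=
  \sum_(i < N.+1) u i *: 'X^i.

Definition is_free_cumulants (C : comRingType) (mu c : nat -> C) : Prop :=
  c 0%N = 1 /\
  forall N : nat,
    (\sum_(k < N.+1) c k *: ('X * trunc_series mu N) ^+ k)`_N = mu N.

(* Main.v *)
Require Import Defs.
From HB Require Import structures.
From mathcomp Require Import all_boot all_order all_algebra.
From mathcomp Require Import complex.
From mathcomp Require Import reals.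
From mathcomp Require Import ring zify.
Set Implicit Arguments. Unset Strict Implicit. Unset Printing Implicit Defensive.
Import Order.TTheory GRing.Theory Num.Theory.
Local Open Scope ring_scope.

Section Eqm.
Variable F : comNzRingType.
Definition eqm (m : nat) (p q : {poly F}) := forall i, (i < m)%N -> p`_i = q`_i.

Lemma eqm_refl m p : eqm m p p. Proof. by []. Qed.
Lemma eqm_sym m p q : eqm m p q -> eqm m q p.
Proof. by move=> h i hi; rewrite h. Qed.
Lemma eqm_trans m p q r : eqm m p q -> eqm m q r -> eqm m p r.
Proof. by move=> h1 h2 i hi; rewrite h1 // h2. Qed.
Lemma eqm_le m m' p q : (m' <= m)%N -> eqm m p q -> eqm m' p q.
Proof. by move=> hm h i hi; apply: h; apply: leq_trans hi hm. Qed.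
Lemma eqmD m p p' q q' : eqm m p p' -> eqm m q q' -> eqm m (p + q) (p' + q').
Proof. by move=> h1 h2 i hi; rewrite !coefD h1 // h2. Qed.
Lemma eqmN m p p' : eqm m p p' -> eqm m (- p) (- p').
Proof. by move=> h1 i hi; rewrite !coefN h1. Qed.
Lemma eqmM m p p' q q' : eqm m p p' -> eqm m q q' -> eqm m (p * q) (p' * q').
Proof.
move=> h1 h2 i hi; rewrite !coefM; apply: eq_bigr => j _.
have hj : (j <= i)%N by rewrite -ltnS.
rewrite h1 ?h2 //; [apply: leq_ltn_trans hi; exact: leq_subr| exact: leq_ltn_trans hj hi].
Qed.
Lemma eqmX m p q k : eqm m p q -> eqm m (p ^+ k) (q ^+ k).
Proof. move=> h; elim: k => [|k IH]; first exact: eqm_refl.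
by rewrite !exprS; apply: eqmM. Qed.
Lemma eqm_deriv m p q : eqm m.+1 p q -> eqm m p^`() q^`().
Proof. by move=> h i hi; rewrite !coef_deriv h. Qed.
Lemma eqmXM m p q : eqm m p q -> eqm m.+1 ('X * p) ('X * q).
Proof. by move=> h [|i] hi; rewrite !coefXM //= h. Qed.
Lemma eqmXMl m p q : eqm m p q -> eqm m ('X * p) ('X * q).
Proof. by move=> h; apply: eqm_le (eqmXM h). Qed.
End Eqm.

Section Core.
Variable F : numFieldType.

Lemma coef_deriv_exp (P : {poly F}) j i :
  (P^`() * P ^+ j)`_i *+ j.+1 = (P ^+ j.+1)`_i.+1 *+ i.+1.
Proof.
have := coef_deriv (P ^+ j.+1) i; rewrite deriv_exp /= coefMn => <-.
by [].
Qed.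

Lemma termT n (Ph M : {poly F}) i :
  eqm n.+1 (Ph * M) 1 -> eqm n (Ph * M^`()) (- (Ph^`() * M)) ->
  (i <= n.+1)%N -> (0 < n)%N ->
  ((('X * M) ^+ i)^`() * Ph ^+ n)`_n.-1 = if i == n then n%:R else 0.
Proof.
move=> H2 D2 hi hn.
case: i hi => [|i] hi.
  by rewrite expr0 -polyC1 derivC mul0r coef0; case: eqP => // en; move: hn; rewrite -en.
rewrite deriv_exp /= derivM derivX mul1r exprMn.
have -> : (M + 'X * M^`()) * ('X ^+ i * M ^+ i) *+ i.+1 * Ph ^+ n =
   'X^i * (M ^+ i * Ph ^+ n * (M + 'X * M^`())) *+ i.+1.
  by rewrite -!mulrnAl; ring.
rewrite coefMn coefXnM.
case: ltnP => hni.
  rewrite mul0rn; case: eqP => // ein.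
  by move: hni; rewrite -ein /= ltnn.
have [j hj] : exists j, n = (i + j.+1)%N.
  exists (n.-1 - i)%N; case: n {H2 D2 hi} hn hni => // n _ /= hni.
  by rewrite addnS subnKC.
have -> : (n.-1 - i)%N = j by rewrite hj addnS /= addKn.
have HPM : eqm n.+1 (Ph ^+ i * M ^+ i) 1.
  by rewrite -exprMn -(expr1n _ i); apply: eqmX.
have E1 : eqm n (M ^+ i * Ph ^+ n * (M + 'X * M^`()))
     (Ph ^+ j + 'X * (Ph ^+ j * - (Ph^`() * M))).
  have -> : M ^+ i * Ph ^+ n * (M + 'X * M^`()) =
     (Ph ^+ i * M ^+ i) * (Ph ^+ j * (Ph * M) + 'X * (Ph ^+ j * (Ph * M^`()))).
    by rewrite hj exprD exprS; ring.
  rewrite -[X in eqm _ _ X]mul1r; apply: eqmM; first exact: eqm_le HPM.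
  apply: eqmD.
    rewrite -[X in eqm _ _ X]mulr1; apply: eqmM; first exact: eqm_refl.
    exact: eqm_le H2.
  apply: eqmXMl; apply: eqmM => //; exact: eqm_refl.
have jn : (j < n)%N by rewrite hj addnS ltnS leq_addl.
rewrite E1 //.
case: j hj jn E1 => [|j] hj jn E1.
  rewrite coefD coefXM eqxx addr0 expr0 coef1 eqxx.
  by rewrite hj addn1 eqxx -mulr_natr mul1r.
have E2 : eqm n ('X * (Ph ^+ j.+1 * - (Ph^`() * M))) (- ('X * (Ph^`() * Ph ^+ j))).
  have -> : 'X * (Ph ^+ j.+1 * - (Ph^`() * M)) = - ('X * (Ph^`() * Ph ^+ j * (Ph * M))).
    by rewrite exprS; ring.
  apply: eqmN; apply: eqmXMl.
  rewrite -[X in eqm _ _ X]mulr1; apply: eqmM; first exact: eqm_refl.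
  exact: eqm_le H2.
rewrite coefD E2 // coefN coefXM /=.
have -> : (i.+1 == n) = false by apply/eqP => e; clear -e hj; lia.
have -> : (Ph^`() * Ph ^+ j)`_j = (Ph ^+ j.+1)`_j.+1.
  apply: (@mulIf _ (j.+1%:R : F)); first by rewrite pnatr_eq0.
  by rewrite !mulr_natr coef_deriv_exp.
by rewrite subrr mul0rn.
Qed.

Lemma core (k : nat) (c : nat -> F) (B M : {poly F}) :
  let n := k.+2 in
  eqm n.+1 (\sum_(i < n.+1) c i *: ('X * M) ^+ i) M ->
  eqm n.+1 ((1 - B) * M) 1 ->
  c n *+ k.+1 = - ((1 - B) ^+ k.+1)`_n.
Proof.
move=> n H1 H2; set Ph := 1 - B.
have D1 := eqm_deriv H1.
have D2 : eqm n (Ph * M^`()) (- (Ph^`() * M)).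
  have := eqm_deriv H2; rewrite derivM -polyC1 derivC => h i hi.
  have := h i hi; rewrite coef0 coefD coefN => e.
  by apply/eqP; rewrite -addr_eq0 addrC e.
have HPM j : eqm n.+1 (Ph ^+ j * M ^+ j) 1.
  by rewrite -exprMn -(expr1n _ j); apply: eqmX.
set Z := (M^`() * Ph ^+ n)`_n.-1.
have C2 : Z *+ k.+1 = - ((Ph ^+ k.+1)`_n) *+ n.
  have E : eqm n (M^`() * Ph ^+ n) (- (Ph^`() * Ph ^+ k)).
    have -> : M^`() * Ph ^+ n = (Ph * M^`()) * Ph ^+ k.+1.
      by rewrite /n exprS; ring.
    have T1 := eqmM D2 (@eqm_refl _ n (Ph ^+ k.+1)).
    apply: (eqm_trans T1).
    have -> : - (Ph^`() * M) * Ph ^+ k.+1 = - (Ph^`() * Ph ^+ k) * ((Ph * M)).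
      by rewrite exprS; ring.
    rewrite -[X in eqm _ _ X]mulr1; apply: eqmM; first exact: eqm_refl.
    exact: eqm_le H2.
  rewrite /Z E //= coefN mulNrn.
  by rewrite mulNrn coef_deriv_exp.
have C1 : Z = c n *+ n.
  rewrite /Z.
  have -> : (M^`() * Ph ^+ n)`_n.-1 =
     ((\sum_(i < n.+1) c i *: ('X * M) ^+ i)^`() * Ph ^+ n)`_n.-1.
    by rewrite (eqmM (eqm_sym D1) (@eqm_refl _ n (Ph ^+ n))).
  rewrite raddf_sum mulr_suml coef_sum.
  rewrite (eq_bigr (fun i : 'I_n.+1 => c i * (if (i : nat) == n then n%:R else 0))); last first.
    move=> i _.
    change (((c i *: ('X * M) ^+ i)^`() * Ph ^+ n)`_n.-1 = c i * (if (i : nat) == n then n%:R else 0)).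
    by rewrite derivZ -scalerAl coefZ (termT H2 D2) // ltnW // ltn_ord.
  rewrite big_ord_recr /= eqxx big1 ?add0r ?mulr_natr //.
  by move=> i _; rewrite (ltn_eqF (ltn_ord i)) mulr0.
apply: (@mulIf _ (n%:R : F)); first by rewrite pnatr_eq0.
by rewrite !mulr_natr -mulrnA mulnC mulrnA -C1 C2.
Qed.
End Core.

Definition nxt (x : nat) : seq nat :=
  [:: x.+1, x & if x is x'.+1 then [:: x'] else [::]].

Arguments nxt : simpl never.

Definition ext1 (s : seq nat) := [seq h :: s | h <- nxt (head 0%N s)].
Arguments ext1 : simpl never.

Fixpoint ext (ss : seq (seq nat)) : seq (seq nat) :=
  if ss is s :: ss' then ext1 s ++ ext ss' else [::].

Fixpoint pref (n : nat) : seq (seq nat) :=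
  if n is n'.+1 then ext (pref n') else [:: [:: 0%N]].

Lemma ext_cons s ss : ext (s :: ss) = ext1 s ++ ext ss. Proof. by []. Qed.

Lemma mem_ext1 h t s : (h :: t \in ext1 s) = (t == s) && (h \in nxt (head 0%N s)).
Proof.
rewrite /ext1; apply/mapP/andP => [[u hu [-> ->]]|[/eqP -> hh]] //.
by exists h.
Qed.

Lemma mem_ext ss x : (x \in ext ss) =
  (if x is h :: t then (t \in ss) && (h \in nxt (head 0%N t)) else false).
Proof.
elim: ss => [|s ss IH]; first by case: x.
rewrite ext_cons mem_cat IH {IH}; case: x => [|h t].
  by rewrite orbF; apply/mapP => -[].
rewrite (mem_ext1 h t s) in_cons andb_orl; case: (t =P s) => [->|ne] //=.
Qed.


Lemma nxt_uniq x : uniq (nxt x).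
Proof.
case: x => [|x] //; rewrite /nxt /= !inE !negb_or.
by apply/and3P; split => //; try (apply/andP; split); apply/negP => /eqP; lia.
Qed.

Lemma uniq_ext ss : uniq ss -> uniq (ext ss).
Proof.
elim: ss => [|s ss IH] //; rewrite cons_uniq => /andP [sn us].
rewrite ext_cons cat_uniq IH // andbT; apply/andP; split.
  by rewrite /ext1 map_inj_uniq ?nxt_uniq // => u v [].
apply/hasPn => x; rewrite mem_ext; case: x => [|h t] // /andP [ts _].
rewrite mem_ext1; apply/negP => /andP [/eqP e _]; move: sn; rewrite -e ts.
by [].
Qed.

Lemma pref_uniq n : uniq (pref n).
Proof. by elim: n => [|n IH] //=; apply: uniq_ext. Qed.

Lemma pref_nil n : ([::] \in pref n) = false.
Proof. by case: n => [|n] //=; rewrite mem_ext. Qed.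

Lemma nxt_le h x : h \in nxt x -> (h <= x.+1)%N.
Proof.
rewrite /nxt; case: x => [|x]; rewrite !inE.
  by case/orP => /eqP ->.
by case/or3P => /eqP ->; lia.
Qed.

Lemma mem_head_le (t : seq nat) k : (forall x, x \in t -> x <= k)%N -> (head 0%N t <= k)%N.
Proof. by case: t => [|y t] //= H; apply: H; rewrite mem_head. Qed.

Lemma pref_bound n s : s \in pref n -> forall x, x \in s -> (x <= n)%N.
Proof.
elim: n s => [|n IH] s /=; first by rewrite inE => /eqP -> x; rewrite inE => /eqP ->.
rewrite mem_ext; case: s => [|h t] // /andP [ht hh] x; rewrite in_cons.
case/orP => [/eqP ->|xt].
  apply: leq_trans (nxt_le hh) _; rewrite ltnS; apply: mem_head_le; exact: IH.
by apply: leqW; exact: (IH t ht x xt).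
Qed.

Fixpoint hs (f : nat -> nat) (k : nat) : seq nat :=
  if k is k'.+1 then f k :: hs f k' else [:: f 0%N].

Lemma head_hs f k : head 0%N (hs f k) = f k. Proof. by case: k. Qed.

Lemma hs_pref f k : f 0%N = 0%N -> (forall i, (i < k)%N -> f i.+1 \in nxt (f i)) ->
  hs f k \in pref k.
Proof.
move=> f0; elim: k => [|k IH] H /=; first by rewrite f0 inE.
rewrite mem_ext head_hs H // andbT IH // => i hi; apply: H; exact: ltnW.
Qed.

Lemma pref_inv k s f : s \in pref k ->
  (forall i, (i <= k)%N -> f i = nth 0%N s (k - i)) ->
  [/\ hs f k = s, f 0%N = 0%N & forall i, (i < k)%N -> f i.+1 \in nxt (f i)].
Proof.
elim: k s => [|k IH] s /=.
  rewrite inE => /eqP -> H; have f0 := H 0%N (leqnn _); by rewrite f0.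
rewrite mem_ext; case: s => [|h t] // /andP [ht hh] H.
have H' : forall i, (i <= k)%N -> f i = nth 0%N t (k - i).
  by move=> i hi; rewrite H ?subSn // leqW.
have [e1 e2 e3] := IH t ht H'.
have fk : f k.+1 = h by rewrite H // subnn.
split => //; first by congr (_ :: _).
move=> i; rewrite ltnS leq_eqVlt => /orP [/eqP ->|hi]; last exact: e3.
by rewrite fk -(head_hs f k) e1.
Qed.

Lemma hs_inj f g k : hs f k = hs g k -> forall i, (i <= k)%N -> f i = g i.
Proof.
elim: k => [|k IH] /= [e1]; first by move=> i; rewrite leqn0 => /eqP ->.
move=> e2 i; rewrite leq_eqVlt => /orP [/eqP ->|hi] //.
by apply: IH.
Qed.

Section Weights.
Variable C : comNzRingType.
Variables a lam : nat -> C.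

Definition sw (x h : nat) : C :=
  if h == x.+1 then 1 else if h == x then a x else lam x.

Fixpoint wt (s : seq nat) : C :=
  if s is h :: t then (if t is x :: _ then wt t * sw x h else 1) else 1.

Fixpoint ret (s : seq nat) : nat :=
  if s is h :: t then (if t is _ :: _ then (ret t + (h == 0%N))%N else 0%N) else 0%N.

Lemma wt_cons h t : t != [::] -> wt (h :: t) = wt t * sw (head 0%N t) h.
Proof. by case: t. Qed.
Lemma ret_cons h t : t != [::] -> ret (h :: t) = (ret t + (h == 0%N))%N.
Proof. by case: t. Qed.

Lemma wt_hs f k : wt (hs f k) = \prod_(j < k) sw (f j) (f j.+1).
Proof.
elim: k => [|k IH]; first by rewrite big_ord0.
rewrite big_ord_recr /= -IH -(head_hs f k); by case: k {IH}.
Qed.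

Lemma ret_hs f k : ret (hs f k) = (\sum_(j < k) (f j.+1 == 0%N))%N.
Proof.
elim: k => [|k IH]; first by rewrite big_ord0.
rewrite big_ord_recr /= -IH; by case: k {IH}.
Qed.

Lemma big_ext (F : seq nat -> C) ss :
  \sum_(x <- ext ss) F x = \sum_(s <- ss) \sum_(h <- nxt (head 0%N s)) F (h :: s).
Proof.
elim: ss => [|s ss IH]; first by rewrite !big_nil.
by rewrite ext_cons big_cat IH /ext1 big_map [in RHS]big_cons.
Qed.

Definition W n h r : C :=
  \sum_(s <- pref n) (if (head 0%N s == h) && (ret s == r) then wt s else 0).

Lemma W0 h r : W 0 h r = ((h == 0%N) && (r == 0%N))%:R.
Proof. by rewrite /W big_seq1 /= ![0%N == _]eq_sym; case: (_ && _). Qed.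

Lemma Wrec n h r : W n.+1 h r = \sum_(s <- pref n) \sum_(h' <- nxt (head 0%N s))
   (if (h' == h) && ((ret s + (h' == 0%N))%N == r) then wt s * sw (head 0%N s) h' else 0).
Proof.
rewrite /W /= big_ext big_seq [RHS]big_seq; apply: eq_bigr => s hs.
have sn : s != [::] by apply/negP => /eqP e; move: hs; rewrite e pref_nil.
by apply: eq_bigr => hh _; rewrite (wt_cons _ sn) (ret_cons _ sn).
Qed.

Lemma big_nxt (G : nat -> C) x :
  \sum_(h' <- nxt x) G h' = G x.+1 + G x + (if x is x'.+1 then G x' else 0).
Proof. by rewrite /nxt; case: x => [|x]; rewrite !big_cons ?big_nil ?big_seq1 ?addr0 ?addrA. Qed.

Lemma eqnS' n : (n == n.+1) = false. Proof. by elim: n. Qed.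
Lemma eqnSS' n : (n == n.+2) = false. Proof. by elim: n. Qed.

Lemma sw_up x : sw x x.+1 = 1. Proof. by rewrite /sw eqxx. Qed.
Lemma sw_flat x : sw x x = a x. Proof. by rewrite /sw eqnS' eqxx. Qed.
Lemma sw_down x : sw x.+1 x = lam x.+1. Proof. by rewrite /sw eqnSS' eqnS'. Qed.

Lemma inner_pos x h1 (rho r : nat) (w : C) :
  \sum_(h' <- nxt x) (if (h' == h1.+1) && ((rho + (h' == 0%N))%N == r) then w * sw x h' else 0)
  = (if (x == h1) && (rho == r) then w else 0)
  + (if (x == h1.+1) && (rho == r) then w * a h1.+1 else 0)
  + (if (x == h1.+2) && (rho == r) then w * lam h1.+2 else 0).
Proof.
rewrite big_nxt eqSS addn0 sw_up mulr1; congr (_ + _ + _).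
  by case: eqP => [->|] //=; rewrite addn0 sw_flat.
case: x => [|x] //; rewrite eqSS; case: eqP => [->|] //=.
by rewrite addn0 sw_down.
Qed.

Lemma inner_zero x (rho r : nat) (w : C) :
  \sum_(h' <- nxt x) (if (h' == 0%N) && ((rho + (h' == 0%N))%N == r) then w * sw x h' else 0)
  = (if (x == 0%N) && (rho.+1 == r) then w * a 0 else 0)
  + (if (x == 1%N) && (rho.+1 == r) then w * lam 1 else 0).
Proof.
rewrite big_nxt /= add0r; congr (_ + _).
  by case: eqP => [->|] //=; rewrite addn1 sw_flat.
case: x => [|x] //; rewrite eqSS; case: eqP => [->|] //=.
by rewrite addn1 sw_down.
Qed.

Lemma sum_if_mulr (I : Type) (l : seq I) (P : I -> bool) (f : I -> C) k :
  \sum_(i <- l) (if P i then f i * k else 0) = (\sum_(i <- l) (if P i then f i else 0)) * k.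
Proof. by rewrite mulr_suml; apply: eq_bigr => i _; case: ifP; rewrite ?mul0r. Qed.

Lemma W_pos n h1 r :
  W n.+1 h1.+1 r = W n h1 r + W n h1.+1 r * a h1.+1 + W n h1.+2 r * lam h1.+2.
Proof.
rewrite Wrec (eq_bigr _ (fun s _ => inner_pos _ _ _ _ _)) !big_split /=.
by rewrite !sum_if_mulr.
Qed.

Lemma W_zeroS n r : W n.+1 0 r.+1 = W n 0 r * a 0 + W n 1 r * lam 1.
Proof.
by rewrite Wrec (eq_bigr _ (fun s _ => inner_zero _ _ _ _)) !big_split /= !sum_if_mulr.
Qed.

Lemma W_zero0 n : W n.+1 0 0 = 0.
Proof.
by rewrite Wrec (eq_bigr _ (fun s _ => inner_zero _ _ _ _)) big1 // => s _; rewrite !andbF addr0.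
Qed.

Lemma W0pos n r : W 0 n r.+1 = 0.
Proof. by rewrite W0 andbF. Qed.

Lemma W_decomp r n h :
  W n h r.+1 = \sum_(j < n) W j.+1 0 r.+1 * W (n - j.+1) h 0.
Proof.
elim: n h => [|n IH] h; first by rewrite W0pos big_ord0.
rewrite big_ord_recr /= subnn.
case: h => [|h1].
  rewrite W0 eqxx /= mulr1 big1 ?add0r // => j _.
  have -> : (n.+1 - j.+1 = (n - j.+1).+1)%N by rewrite subSS subnSK.
  by rewrite W_zero0 mulr0.
rewrite W0 /= mulr0 addr0 W_pos !IH !big_distrl -!big_split /=.
apply: eq_bigr => j _.
have -> : (n.+1 - j.+1 = (n - j.+1).+1)%N by rewrite subSS subnSK.
rewrite W_pos; ring.
Qed.

Lemma W_key n r :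
  W n.+1 0 r.+1 = \sum_(j < n.+1) W j 0 r * W (n.+1 - j) 0 1.
Proof.
rewrite big_ord_recl /= subn0.
case: r => [|r].
  rewrite W0 /= mul1r big1 ?addr0 // => j _.
  by rewrite W_zero0 mul0r.
rewrite W0pos mul0r add0r W_zeroS !W_decomp big_distrl big_distrl -big_split /=.
apply: eq_bigr => j _ /=; rewrite /bump /= add1n subSS -(subnSK (ltn_ord j)) (W_zeroS (n - j.+1) 0).
ring.
Qed.

Definition Bp L : {poly C} := \poly_(i < L.+1) W i 0 1.

Lemma coef_Bp_pow L r n : (n <= L)%N -> ((Bp L) ^+ r)`_n = W n 0 r.
Proof.
elim: r n => [|r IH] n hn.
  by rewrite expr0 coef1; case: n hn => [|n] _; rewrite ?W0 ?W_zero0.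
rewrite exprSr coefM.
rewrite (eq_bigr (fun j : 'I_n.+1 => W j 0 r * W (n - j) 0 1)); last first.
  move=> j _; rewrite IH ?coef_poly; last exact: leq_trans (leq_ord j) hn.
  by rewrite ltnS (leq_trans (leq_subr _ _) hn).
case: n hn => [|n] hn.
  by rewrite big_ord1 /= !W0pos mulr0.
by rewrite W_key big_ord_recr /= subnn W0pos mulr0 addr0.
Qed.

End Weights.

Lemma mem_nxt h x : (h \in nxt x) = [|| h == x.+1, h == x | h.+1 == x].
Proof. by case: x => [|x]; rewrite /nxt !inE ?eqSS //= orbF. Qed.

Section Paths.
Variable C : comNzRingType.
Variables a lam : nat -> C.
Variable n : nat.

Definition phi (p : mpath n) : seq nat := hs (ht p) n.

Lemma phi_inj : injective phi.
Proof.
move=> p q /hs_inj H; apply/ffunP => i; apply: val_inj.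
have := H i (ltn_ord i); by rewrite /ht inord_val.
Qed.

Lemma valuation_phi (p : mpath n) : valuation a lam p = wt a lam (phi p).
Proof. by rewrite /valuation /phi wt_hs. Qed.

Lemma returns_phi (p : mpath n) : returns0 p = ret (phi p).
Proof.
rewrite /returns0 /phi ret_hs -sum1dep_card big_mkcond /=.
by apply: eq_bigr => j _; case: eqP.
Qed.

Lemma motzkinP (p : mpath n) : (p \in motzkin_paths n) =
  [&& ht p 0 == 0%N, ht p n == 0%N & [forall i : 'I_n, ht p i.+1 \in nxt (ht p i)]].
Proof.
rewrite inE /is_motzkin; congr [&& _, _ & _]; apply: eq_forallb => i.
by rewrite mem_nxt.
Qed.

Lemma perm_phi :
  perm_eq [seq phi p | p <- enum (motzkin_paths n)] [seq s <- pref n | head 0%N s == 0%N].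
Proof.
apply: uniq_perm.
- by rewrite map_inj_uniq ?enum_uniq //; exact: phi_inj.
- by rewrite filter_uniq // pref_uniq.
move=> s; apply/mapP/idP.
  move=> [p]; rewrite mem_enum motzkinP => /and3P [h0 hn /forallP hs] ->.
  rewrite mem_filter /phi head_hs hn /=; apply: hs_pref; first exact/eqP.
  by move=> i hi; have := hs (Ordinal hi).
rewrite mem_filter => /andP [hd sp].
pose p : mpath n := [ffun i : 'I_n.+1 => inord (nth 0%N s (n - i))].
have hp : forall k, (k <= n)%N -> ht p k = nth 0%N s (n - k).
  move=> k hk; have ek : ((inord k : 'I_n.+1) : nat) = k by rewrite inordK // ltnS.
  rewrite /ht ffunE ek inordK //.
  case: (ltnP (n - k) (size s)) => [/(mem_nth 0%N) hm|/(nth_default 0%N) ->] //.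
  by rewrite ltnS; exact: pref_bound sp _ hm.
have [e1 e2 e3] := pref_inv sp hp.
exists p; last by rewrite /phi e1.
rewrite mem_enum motzkinP e2 hp // subnn nth0 hd /=.
by apply/forallP => i; apply: e3.
Qed.

Lemma path_sum r :
  \sum_(p in motzkin_paths n | returns0 p == r) valuation a lam p = W a lam n 0 r.
Proof.
rewrite big_mkcondr /=.
transitivity (\sum_(p in motzkin_paths n)
   (fun s => if (head 0%N s == 0%N) && (ret s == r) then wt a lam s else 0) (phi p)).
  apply: eq_bigr => p; rewrite motzkinP => /and3P [_ hn _].
  by rewrite /phi head_hs hn /= -/(phi p) returns_phi valuation_phi.
rewrite /W.
have HF : forall G : seq nat -> C, (forall s, head 0%N s != 0%N -> G s = 0) ->
    \sum_(s <- pref n) G s = \sum_(s <- [seq s <- pref n | head 0%N s == 0%N]) G s.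
  move=> G HG; rewrite big_filter [RHS]big_mkcond; apply: eq_bigr => s _.
  by case: eqP => // /eqP /HG.
rewrite HF; last by move=> s /negbTE ->.
by rewrite -(perm_big _ perm_phi) big_map big_enum.
Qed.

End Paths.

Lemma moment_W (C : comNzRingType) (a lam : nat -> C) n :
  moment a lam n.+1 = \sum_(r < n.+2) W a lam n.+1 0 r.
Proof.
rewrite /moment.
rewrite (eq_bigr (fun p => \sum_(r < n.+2) (if returns0 p == r then valuation a lam p else 0))); last first.
  move=> p _.
  have hr : (returns0 p < n.+2)%N.
    by rewrite ltnS /returns0; apply: leq_trans (max_card _) _; rewrite card_ord.
  rewrite (bigD1 (Ordinal hr)) //= eqxx big1 ?addr0 // => j hj.
  by case: eqP => // e; move: hj; rewrite -(inj_eq val_inj) /= e eqxx.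
rewrite exchange_big /=; apply: eq_bigr => r _.
by rewrite -path_sum big_mkcondr.
Qed.

Section Assembly.
Variable C : comNzRingType.

Lemma sum_trunc (f : nat -> C) N n : (N <= n)%N -> (forall k, (N < k)%N -> f k = 0) ->
  \sum_(k < n.+1) f k = \sum_(k < N.+1) f k.
Proof.
move=> hN hf; rewrite [RHS](big_ord_widen _ _ (_ : N.+1 <= n.+1)%N) ?ltnS //.
rewrite [RHS]big_mkcond /=; apply: eq_bigr => k _; case: ltnP => // hk.
by rewrite hf.
Qed.

Lemma coef_pow_small (p : {poly C}) r N : p`_0 = 0 -> (N < r)%N -> (p ^+ r)`_N = 0.
Proof.
move=> p0; elim: r N => [|r IH] N // hN.
rewrite exprSr coefM big1 // => j _.
have hj : (j <= N)%N by rewrite -ltnS.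
case: (ltnP j r) => hjr; first by rewrite IH // mul0r.
have ejN : j = N :> nat.
  by apply/eqP; rewrite eqn_leq hj /=; rewrite ltnS in hN; exact: leq_trans hN hjr.
by rewrite ejN subnn p0 mulr0.
Qed.

Lemma trunc_coef (u : nat -> C) n i : (i <= n)%N -> (trunc_series u n)`_i = u i.
Proof.
have -> : trunc_series u n = \poly_(i < n.+1) u i by rewrite poly_def.
by move=> hi; rewrite coef_poly ltnS hi.
Qed.

Lemma coef_sign (p : {poly C}) i N : ((-1) ^+ i * p)`_N = (-1) ^+ i * p`_N.
Proof.
elim: i => [|i IH]; first by rewrite !expr0 !mul1r.
by rewrite !exprS !mulN1r !mulNr coefN IH.
Qed.

Variables a lam : nat -> C.

Lemma partition_W n (G : nat -> C) :
  \sum_(p in motzkin_paths n) G (returns0 p) * valuation a lam p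
  = \sum_(r < n.+1) G r * W a lam n 0 r.
Proof.
rewrite (eq_bigr (fun p => \sum_(r < n.+1)
   (if returns0 p == r then G r * valuation a lam p else 0))); last first.
  move=> p _.
  have hr : (returns0 p < n.+1)%N.
    by rewrite ltnS /returns0; apply: leq_trans (max_card _) _; rewrite card_ord.
  rewrite (bigD1 (Ordinal hr)) //= eqxx big1 ?addr0 // => j hj.
  by case: eqP => // e; move: hj; rewrite -(inj_eq val_inj) /= e eqxx.
rewrite exchange_big /=; apply: eq_bigr => r _.
by rewrite -path_sum mulr_sumr big_mkcondr.
Qed.

Lemma moment_coef n N : (N <= n)%N ->
  moment a lam N = (\sum_(r < n.+1) (Bp a lam n) ^+ r)`_N.
Proof.
move=> hN; rewrite coef_sum.
rewrite (eq_bigr (fun r : 'I_n.+1 => W a lam N 0 r)); last by move=> r _; rewrite coef_Bp_pow.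
rewrite (sum_trunc (f := fun r => W a lam N 0 r) hN); last first.
  move=> k hk; rewrite -(coef_Bp_pow a lam k (leqnn N)) coef_pow_small //.
  by rewrite coef_poly /= W0pos.
case: N hN => [|N] hN.
  by rewrite big_ord1 W0.
by rewrite moment_W.
Qed.

End Assembly.

Lemma geom (C : comNzRingType) (p : {poly C}) m :
  (1 - p) * \sum_(r < m) p ^+ r = 1 - p ^+ m.
Proof.
elim: m => [|m IH]; first by rewrite big_ord0 mulr0 expr0 subrr.
by rewrite big_ord_recr /= mulrDr IH exprSr; ring.
Qed.

Unset Implicit Arguments.

Theorem mainTheorem1 (R : realType) (a lam c : nat -> R[i]) :
  is_free_cumulants (moment a lam) c ->
  forall n : nat, (2 <= n)%N ->
    c n = \sum_(p in motzkin_paths n)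
            ((-1) ^+ (returns0 p).-1 / (n.-1)%:R
              * ('C(n.-1, returns0 p))%:R * valuation a lam p).
Proof.
move=> [c0 Hc] n hn.
case: n hn => [|[|k]] // _.
set n := k.+2.
set M := trunc_series (moment a lam) n.
set B := Bp a lam n.
have H1 : eqm n.+1 (\sum_(i < n.+1) c i *: ('X * M) ^+ i) M.
  move=> N hN; rewrite ltnS in hN.
  rewrite /M trunc_coef // -(Hc N) !coef_sum -/M.
  rewrite (sum_trunc (f := fun i => (c i *: ('X * M) ^+ i)`_N) hN); last first.
    by move=> i hi; rewrite coefZ exprMn coefXnM hi mulr0.
  apply: eq_bigr => i _; rewrite !coefZ; congr (_ * _).
  apply: (eqmX _ (@eqmXMl _ N.+1 _ _ _)) => //.
  move=> j hj; rewrite /M !trunc_coef //.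
  by apply: leq_trans hN.
have B0 : B`_0 = 0 by rewrite coef_poly /= W0pos.
have H2 : eqm n.+1 ((1 - B) * M) 1.
  have EQ : eqm n.+1 M (\sum_(r < n.+1) B ^+ r).
    by move=> N hN; rewrite ltnS in hN; rewrite /M trunc_coef // (moment_coef a lam hN).
  apply: eqm_trans (eqmM (@eqm_refl _ n.+1 (1 - B)) EQ) _.
  rewrite geom => N hN; by rewrite coefB coef_pow_small // subr0.
have Hcore := core H1 H2.
have cn : c n = - ((1 - B) ^+ k.+1)`_n / (k.+1)%:R.
  by rewrite -Hcore -[c n *+ _]mulr_natr mulfK // pnatr_eq0.
have E3 : ((1 - B) ^+ k.+1)`_n = \sum_(i < k.+2) (-1) ^+ i * W a lam n 0 i *+ 'C(k.+1, i).
  rewrite exprBn coef_sum; apply: eq_bigr => i _.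
  by rewrite coefMn expr1n mulr1 coef_sign coef_Bp_pow.
rewrite (partition_W a lam n (fun r => (-1) ^+ r.-1 / (n.-1)%:R * ('C(n.-1, r))%:R)).
rewrite cn E3 [RHS]big_ord_recr /= bin_small // mulr0n mulr0 mul0r addr0.
rewrite mulNr mulr_suml -sumrN; apply: eq_bigr => -[[|i] hi] _ /=.
  by rewrite W_zero0 mulr0 mul0rn mul0r oppr0 mulr0.
rewrite exprS mulN1r -mulr_natr; ring.
Qed.
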